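(* Let $\tau$ be a signature with no function or constant symbols and $\varphi$ a sentence of $\mathcal L_{\omega,\omega}(\tau)$. (i) If $\varphi$ is a $\Sigma^0_2$-sentence, then $\vartheta(\varphi)$ is expressible by a sentence of $\mathcal L_{\omega,\omega}(\tau)$. (ii) If there is a natural number $n\ge 1$ such that $\neg\varphi$ has no model of cardinality $n$, then $\vartheta(\varphi)$ is expressible by a sentence of $\mathcal L_{\omega,\omega}(\tau)$. (iii) $\vartheta(\varphi)$ is expressed by $\varphi$ itself (i.e. for every $\tau$-model $\mathfrak A$, $\mathfrak A\vDash\vartheta(\varphi)$ iff $\mathfrak A\vDash\varphi$) if and only if $\varphi$ is logically equivalent to an existential ($\Sigma^0_1$) sentence.
   Context: Models are nonempty. A submodel of a $\tau$-model $\mathfrak A$ is a substructure (nonempty subset closed under the interpretations of the function and constant symbols of $\tau$, with induced structure). $\mathcal L_{\omega,\omega}(\tau)$ is ordinary first-order logic with equality. $\mathfrak A\vDash\vartheta(\varphi)$ iff some submodel of $\mathfrak A$ satisfies $\varphi$. A property of $\tau$-models is expressible by a sentence $\chi$ if for every $\tau$-model $\mathfrak A$, $\mathfrak A$ has the property iff $\mathfrak A\vDash\chi$. A $\Sigma^0_2$-sentence is a prenex sentence $\exists\bar x\,\forall\bar y\,\psi_0$ with $\psi_0$ quantifier-free; a $\Sigma^0_1$ (existential) sentence is one of the form $\exists\bar x\,\psi_0$ with $\psi_0$ quantifier-free. *)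

(* Defs.v *)
From mathcomp Require Import all_boot.
Set Implicit Arguments.
Unset Strict Implicit.
Unset Printing Implicit Defensive.

Record signature := Signature {
  rsym : Type;
  arity : rsym -> nat
}.

Section FOL.
Variable tau : signature.

Inductive form : Type :=
| FBot : form
| FEq : nat -> nat -> form
| FRel : forall r : rsym tau, ('I_(arity r) -> nat) -> form
| FNeg : form -> form
| FAnd : form -> form -> form
| FOr : form -> form -> form
| FImp : form -> form -> form
| FEx : nat -> form -> form
| FAll : nat -> form -> form.

(* Models are nonempty. *)
Record structure := Structure {
  carrier :> Type;
  witness : carrier;
  interp : forall r : rsym tau, ('I_(arity r) -> carrier) -> Prop
}.

Definition upd (A : Type) (e : nat -> A) (x : nat) (a : A) : nat -> A :=
  fun y => if y == x then a else e y.

Fixpoint sat (A : structure) (e : nat -> A) (f : form) : Prop :=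
  match f with
  | FBot => False
  | FEq x y => e x = e y
  | FRel r v => @interp A r (fun i => e (v i))
  | FNeg g => ~ sat e g
  | FAnd g h => sat e g /\ sat e h
  | FOr g h => sat e g \/ sat e h
  | FImp g h => sat e g -> sat e h
  | FEx x g => exists a : A, sat (upd e x a) g
  | FAll x g => forall a : A, sat (upd e x a) g
  end.

Fixpoint free (x : nat) (f : form) : Prop :=
  match f with
  | FBot => False
  | FEq y z => x = y \/ x = z
  | FRel r v => exists i, v i = x
  | FNeg g => free x g
  | FAnd g h | FOr g h | FImp g h => free x g \/ free x h
  | FEx y g | FAll y g => x <> y /\ free x g
  end.

Definition sentence (f : form) : Prop := forall x, ~ free x f.

Definition models (A : structure) (f : form) : Prop := forall e : nat -> A, sat e f.

Fixpoint qfree (f : form) : Prop :=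
  match f with
  | FBot | FEq _ _ | FRel _ _ => True
  | FNeg g => qfree g
  | FAnd g h | FOr g h | FImp g h => qfree g /\ qfree h
  | FEx _ _ | FAll _ _ => False
  end.

Definition Exs (xs : seq nat) (f : form) : form := foldr FEx f xs.
Definition Alls (xs : seq nat) (f : form) : form := foldr FAll f xs.

Definition sigma01 (f : form) : Prop :=
  sentence f /\ exists xs psi, qfree psi /\ f = Exs xs psi.
Definition sigma02 (f : form) : Prop :=
  sentence f /\ exists xs ys psi, qfree psi /\ f = Exs xs (Alls ys psi).

(* Submodels: with no function/constant symbols, a submodel is the induced
   structure on an arbitrary nonempty subset. *)
Definition submodel (A : structure) (P : A -> Prop) (a0 : A) (h0 : P a0)
  : structure :=
  @Structure {a : A | P a} (exist P a0 h0)
    (fun r v => @interp A r (fun i => proj1_sig (v i))).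

Definition vartheta_sat (A : structure) (f : form) : Prop :=
  exists (P : A -> Prop) (a0 : A) (h0 : P a0), models (submodel h0) f.

Definition expressed_by (Prp : structure -> Prop) (chi : form) : Prop :=
  sentence chi /\ forall A : structure, Prp A <-> models A chi.

Definition expressible (Prp : structure -> Prop) : Prop :=
  exists chi, expressed_by Prp chi.

Definition has_card (A : structure) (n : nat) : Prop :=
  exists g : 'I_n -> A, bijective g.

Definition log_equiv (f g : form) : Prop :=
  forall A : structure, models A f <-> models A g.

End FOL.

(* Main.v *)
Require Import Defs.
From mathcomp Require Import all_boot.
From Stdlib Require Import Classical ClassicalEpsilon FunctionalExtensionality PropExtensionality ProofIrrelevance.
Set Implicit Arguments.
Unset Strict Implicit.
Unset Printing Implicit Defensive.


Lemma sig_eq {T : Type} {P : T -> Prop} (a b : {x | P x}) :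
  proj1_sig a = proj1_sig b -> a = b.
Proof. destruct a as [a pa], b as [b pb]; simpl; intros ->; f_equal; apply proof_irrelevance. Qed.

Lemma InE (T : eqType) (x : T) (s : seq T) : List.In x s <-> x \in s.
Proof.
elim: s => [|y s IH] //=; rewrite in_cons; split.
- by case=> [->|/IH ->]; rewrite ?eqxx ?orbT.
- by case/orP=> [/eqP ->|/IH]; [left|right].
Qed.

Record ultra (I : Type) := Ultra {
  uU :> (I -> Prop) -> Prop;
  uT : uU (fun _ => True);
  uI : forall S T, uU S -> uU T -> uU (fun i => S i /\ T i);
  uS : forall (S T : I -> Prop), (forall i, S i -> T i) -> uU S -> uU T;
  u0 : ~ uU (fun _ => False);
  uC : forall S, uU S \/ uU (fun i => ~ S i)
}.

Module UF.
From mathcomp Require Import boolp classical_sets filter.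
Lemma directed_ultra (I Q : Type) (Sets : Q -> I -> Prop) (q0 : Q)
  (join : Q -> Q -> Q)
  (Hj : forall a b i, Sets (join a b) i -> Sets a i /\ Sets b i)
  (Hne : forall q, exists i, Sets q i) :
  exists U : ultra I, forall q, U (Sets q).
Proof.
pose F := fun S : I -> Prop => exists q, forall i, Sets q i -> S i.
have PF : ProperFilter F.
  split.
    move=> [q Hq]; case: (Hne q) => i /Hq; done.
  split.
  - by exists q0.
  - move=> S T [a Ha] [b Hb]; exists (join a b) => i /Hj [/Ha ? /Hb ?]; by split.
  - move=> S T ST [a Ha]; exists a => i /Ha; exact: ST.
have [G [GU FG]] := ultraFilterLemma PF.
have GP : ProperFilter G by exact: ultra_proper.
have GF : Filter G by exact: filter_filter.
unshelve eexists.
  apply: (@Ultra I G).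
  - exact: (@filterT _ G GF).
  - by move=> S T HS HT; exact: (@filterI _ G GF S T HS HT).
  - by move=> S T ST HS; exact: (@filterS _ G GF S T ST HS).
  - exact: (@filter_not_empty _ G GP).
  - move=> S; exact: (@in_ultra_setVsetC _ G S GU).
move=> q /=; apply: FG; by exists q.
Qed.
End UF.

Section Basic.
Variable tau : signature.
Implicit Types (A B C : structure tau) (f g : form tau).

Lemma upd_same (X : Type) (e : nat -> X) x a : upd e x a x = a.
Proof. by rewrite /upd eqxx. Qed.
Lemma upd_other (X : Type) (e : nat -> X) x y a : y <> x -> upd e x a y = e y.
Proof. by rewrite /upd => /eqP/negbTE ->. Qed.

Lemma sat_agree A f (e e' : nat -> A) :
  (forall x, free x f -> e x = e' x) -> (sat e f <-> sat e' f).
Proof.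
elim: f e e' => [|x y|r v|g IH|g IH h IH'|g IH h IH'|g IH h IH'|y g IH|y g IH] e e' He /=.
- done.
- by rewrite (He x) ?(He y) //=; [right|left].
- have -> : (fun i => e (v i)) = (fun i => e' (v i)).
    by apply: functional_extensionality => i; apply: He; exists i.
  done.
- by rewrite (IH e e').
- by rewrite (IH e e') ?(IH' e e') // => x Hx; apply: He; [right|left].
- by rewrite (IH e e') ?(IH' e e') // => x Hx; apply: He; [right|left].
- by rewrite (IH e e') ?(IH' e e') // => x Hx; apply: He; [right|left].
- have H a : sat (upd e y a) g <-> sat (upd e' y a) g.
    apply: IH => x Hx; rewrite /upd; case: eqP => // Hxy; apply: He; by split.
  by split=> [[a Ha]|[a Ha]]; exists a; apply/H.
- have H a : sat (upd e y a) g <-> sat (upd e' y a) g.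
    apply: IH => x Hx; rewrite /upd; case: eqP => // Hxy; apply: He; by split.
  by split=> Ha a; apply/H.
Qed.

Lemma sat_agree1 A f (e e' : nat -> A) :
  (forall x, free x f -> e x = e' x) -> sat e f -> sat e' f.
Proof. by move=> H; case: (sat_agree H). Qed.

Lemma sent_sat A f (e e' : nat -> A) : sentence f -> sat e f -> sat e' f.
Proof. move=> Hs; apply: sat_agree1 => x Hx; by case: (Hs x). Qed.

Lemma models_ex A f : sentence f -> (models A f <-> exists e : nat -> A, sat e f).
Proof.
move=> Hs; split.
- move=> H; exists (fun _ => witness A); exact: H.
- by move=> [e He] e'; apply: sent_sat He.
Qed.

Lemma sat_Exs_intro A xs f (t e : nat -> A) :
  sat t f -> (forall y, y \notin xs -> t y = e y) -> sat e (Exs xs f).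
Proof.
elim: xs e => [|x xs IH] e Ht Hte /=.
- by apply: sat_agree1 Ht => y _; apply: Hte.
- exists (t x); apply: IH => // y Hy; rewrite /upd; case: eqP => [->//|Hyx].
  by apply: Hte; rewrite in_cons negb_or Hy andbT; apply/eqP.
Qed.

Lemma sat_Exs_elim A xs f (e : nat -> A) :
  sat e (Exs xs f) -> exists t, sat t f /\ (forall y, y \notin xs -> t y = e y).
Proof.
elim: xs e => [|x xs IH] e /=.
- by move=> H; exists e.
- move=> [a /IH [t [Ht Hte]]]; exists t; split=> // y.
  rewrite in_cons negb_or => /andP [/eqP Hy Hy']; rewrite Hte //; exact: upd_other.
Qed.

Lemma free_Exs xs f x : free x (Exs xs f) <-> free x f /\ x \notin xs.
Proof.
elim: xs => [|y xs IH] /=; first by split=> [H|[]].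
rewrite in_cons negb_or IH; split.
- by move=> [/eqP H [H1 H2]]; rewrite H2 H.
- by move=> [H1 /andP [/eqP H2 H3]].
Qed.

Section Emb.
Variables (B C : structure tau) (h : B -> C).
Hypothesis hinj : forall a b, h a = h b -> a = b.
Hypothesis hrel : forall r (v : 'I_(arity r) -> B),
  interp v <-> interp (fun i => h (v i)).

Lemma upd_comp (e : nat -> B) y a :
  (fun n => h (upd e y a n)) = upd (fun n => h (e n)) y (h a).
Proof. by apply: functional_extensionality => n; rewrite /upd; case: eqP. Qed.

Lemma emb_qf f (e : nat -> B) : qfree f -> (sat e f <-> sat (fun n => h (e n)) f).
Proof.
elim: f e => [|x y|r v|g IH|g IH k IH'|g IH k IH'|g IH k IH'|y g IH|y g IH] e /= Hq.
- done.
- by split=> [->//|/hinj].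
- exact: (hrel (fun i => e (v i))).
- by rewrite IH.
- by case: Hq => /IH -> /IH' ->.
- by case: Hq => /IH -> /IH' ->.
- by case: Hq => /IH -> /IH' ->.
- done.
- done.
Qed.

Hypothesis hsurj : forall c, exists b, h b = c.

Lemma iso_sat f (e : nat -> B) : sat e f <-> sat (fun n => h (e n)) f.
Proof.
elim: f e => [|x y|r v|g IH|g IH k IH'|g IH k IH'|g IH k IH'|y g IH|y g IH] e /=.
- done.
- by split=> [->//|/hinj].
- exact: (hrel (fun i => e (v i))).
- by rewrite IH.
- by rewrite IH IH'.
- by rewrite IH IH'.
- by rewrite IH IH'.
- split=> [[a Ha]|[c Hc]].
    by exists (h a); rewrite -upd_comp -IH.
  case: (hsurj c) => a Ha; exists a; rewrite IH upd_comp Ha //.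
- split=> H c.
    case: (hsurj c) => a <-; rewrite -upd_comp -IH //.
  by rewrite IH upd_comp.
Qed.
End Emb.

Lemma Alls_down (B C : structure tau) (h : B -> C)
  (hinj : forall a b, h a = h b -> a = b)
  (hrel : forall r (v : 'I_(arity r) -> B), interp v <-> interp (fun i => h (v i)))
  ys f (e : nat -> B) :
  qfree f -> sat (fun n => h (e n)) (Alls ys f) -> sat e (Alls ys f).
Proof.
move=> Hq; elim: ys e => [|y ys IH] e /=.
- by rewrite -emb_qf.
- by move=> H a; apply: IH; rewrite upd_comp.
Qed.

Fixpoint vb (f : form tau) : nat :=
  match f with
  | FBot => 0
  | FEq x y => (maxn x y).+1
  | FRel r v => \max_(i < arity r) (v i).+1
  | FNeg g => vb g
  | FAnd g h | FOr g h | FImp g h => maxn (vb g) (vb h)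
  | FEx y g | FAll y g => maxn y.+1 (vb g)
  end.

Lemma free_vb x f : free x f -> x < vb f.
Proof.
elim: f => [|y z|r v|g IH|g IH k IH'|g IH k IH'|g IH k IH'|y g IH|y g IH] //=.
- by case=> ->; rewrite ltnS ?leq_maxl ?leq_maxr.
- by case=> i <-; apply: (leq_trans _ (leq_bigmax i)).
- by case=> [/IH|/IH'] H; apply: (leq_trans H); rewrite ?leq_maxl ?leq_maxr.
- by case=> [/IH|/IH'] H; apply: (leq_trans H); rewrite ?leq_maxl ?leq_maxr.
- by case=> [/IH|/IH'] H; apply: (leq_trans H); rewrite ?leq_maxl ?leq_maxr.
- by case=> _ /IH H; apply: (leq_trans H); rewrite leq_maxr.
- by case=> _ /IH H; apply: (leq_trans H); rewrite leq_maxr.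
Qed.

Definition guard (y : nat) (zs : seq nat) : form tau :=
  foldr (fun z acc => FOr (FEq tau y z) acc) (FBot tau) zs.

Lemma sat_guard A (e : nat -> A) y zs :
  sat e (guard y zs) <-> exists z, List.In z zs /\ e y = e z.
Proof.
elim: zs => [|z zs IH] /=; first by split=> [|[z []]].
rewrite IH; split.
- by case=> [H|[w [Hw H]]]; [exists z; split; [left|]|exists w; split; [right|]].
- by case=> [w [[<-|Hw] H]]; [left|right; exists w].
Qed.

Lemma free_guard x y zs : free x (guard y zs) -> x = y \/ List.In x zs.
Proof.
elim: zs => [|z zs IH] //=.
case=> [[->|->]|/IH [->|H]]; by [left|right; left|left|right; right].
Qed.

Fixpoint rel (zs : seq nat) (f : form tau) : form tau :=
  match f with
  | FNeg g => FNeg (rel zs g)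
  | FAnd g h => FAnd (rel zs g) (rel zs h)
  | FOr g h => FOr (rel zs g) (rel zs h)
  | FImp g h => FImp (rel zs g) (rel zs h)
  | FEx y g => FEx y (FAnd (guard y zs) (rel zs g))
  | FAll y g => FAll y (FImp (guard y zs) (rel zs g))
  | _ => f
  end.

Lemma free_rel x zs f : free x (rel zs f) -> free x f \/ List.In x zs.
Proof.
elim: f => [|y z|r v|g IH|g IH k IH'|g IH k IH'|g IH k IH'|y g IH|y g IH] //=;
  try by left.
- by case=> [/IH|/IH'] [H|H]; by [left; left|right|left; right|right].
- by case=> [/IH|/IH'] [H|H]; by [left; left|right|left; right|right].
- by case=> [/IH|/IH'] [H|H]; by [left; left|right|left; right|right].
- case=> Hxy [/free_guard [//|H]|/IH [H|H]]; by [right|left|right].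
- case=> Hxy [/free_guard [//|H]|/IH [H|H]]; by [right|left|right].
Qed.

Lemma rel_sat A (Q : A -> Prop) a0 (h0 : Q a0) zs M f :
  vb f <= M -> (forall z, List.In z zs -> M <= z) ->
  forall (E : nat -> A) (e : nat -> submodel h0),
  (forall n, n < M -> E n = proj1_sig (e n)) ->
  (forall a, Q a <-> exists z, List.In z zs /\ E z = a) ->
  (sat e f <-> sat E (rel zs f)).
Proof.
move=> Hvb Hzs.
elim: f Hvb => [|x y|r v|g IH|g IH k IH'|g IH k IH'|g IH k IH'|y g IH|y g IH] /= Hvb E e HE HQ.
- done.
- rewrite !HE; last 2 first.
  + by apply: (leq_trans _ Hvb); rewrite ltnS ?leq_maxl ?leq_maxr.
  + by apply: (leq_trans _ Hvb); rewrite ltnS ?leq_maxl ?leq_maxr.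
  by split=> [->//|/sig_eq].
- have -> : (fun i => E (v i)) = (fun i => proj1_sig (e (v i))) => //.
  apply: functional_extensionality => i; apply: HE.
  by apply: (leq_trans _ Hvb); apply: (leq_trans _ (leq_bigmax i)).
- by rewrite (IH Hvb E e).
- move: Hvb; rewrite geq_max => /andP [H1 H2].
  by rewrite (IH H1 E e) // (IH' H2 E e).
- move: Hvb; rewrite geq_max => /andP [H1 H2].
  by rewrite (IH H1 E e) // (IH' H2 E e).
- move: Hvb; rewrite geq_max => /andP [H1 H2].
  by rewrite (IH H1 E e) // (IH' H2 E e).
- move: Hvb; rewrite geq_max => /andP [H1 H2].
  have Hzy z : List.In z zs -> z <> y.
    by move=> /Hzs Hz Hzy; move: H1; rewrite -Hzy ltnNge Hz.
  have key (b : submodel h0) : sat (A:=submodel h0) (upd e y b) g <-> sat (upd E y (proj1_sig b)) (rel zs g).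
    apply: IH => // [n Hn|a]; first by rewrite /upd; case: eqP => // _; apply: HE.
    rewrite HQ; split=> [[z [Hz <-]]|[z [Hz Hza]]]; exists z; split => //.
      by rewrite upd_other //; apply: Hzy.
    by rewrite -Hza upd_other //; apply: Hzy.
  have gd a : sat (upd E y a) (guard y zs) <-> Q a.
    rewrite sat_guard HQ upd_same; split=> [[z [Hz ->]]|[z [Hz <-]]]; exists z; split=> //;
      by rewrite upd_other //; apply: Hzy.
  split=> [[b Hb]|[a [Ha1 Ha2]]].
    by exists (proj1_sig b); split; [apply/gd; exact: (proj2_sig b)|apply/key].
  have Qa : Q a by apply/gd.
  by exists (exist _ a Qa); apply/key.
- move: Hvb; rewrite geq_max => /andP [H1 H2].
  have Hzy z : List.In z zs -> z <> y.
    by move=> /Hzs Hz Hzy; move: H1; rewrite -Hzy ltnNge Hz.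
  have key (b : submodel h0) : sat (A:=submodel h0) (upd e y b) g <-> sat (upd E y (proj1_sig b)) (rel zs g).
    apply: IH => // [n Hn|a]; first by rewrite /upd; case: eqP => // _; apply: HE.
    rewrite HQ; split=> [[z [Hz <-]]|[z [Hz Hza]]]; exists z; split => //.
      by rewrite upd_other //; apply: Hzy.
    by rewrite -Hza upd_other //; apply: Hzy.
  have gd a : sat (upd E y a) (guard y zs) <-> Q a.
    rewrite sat_guard HQ upd_same; split=> [[z [Hz ->]]|[z [Hz <-]]]; exists z; split=> //;
      by rewrite upd_other //; apply: Hzy.
  split=> [H a Ha|H b].
    have Qa : Q a by apply/gd.
    by apply/(key (exist _ a Qa)).
  by apply/key; apply: H; apply/gd; exact: (proj2_sig b).
Qed.

Lemma In_nth (X : Type) (x0 a : X) (L : seq X) :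
  List.In a L <-> exists k, k < size L /\ nth x0 L k = a.
Proof.
elim: L => [|b L IH] /=; first by split=> [|[k []]].
rewrite IH; split.
- by case=> [<-|[k [Hk <-]]]; [exists 0|exists k.+1].
- by case=> [[|k] [Hk <-]]; [left|right; exists k].
Qed.

Lemma In_map (X Y : Type) (f : X -> Y) (L : seq X) y :
  List.In y (map f L) <-> exists x, List.In x L /\ f x = y.
Proof.
elim: L => [|b L IH] /=; first by split=> [|[x []]].
rewrite IH; split.
- case=> [<-|[x [Hx <-]]]; [exists b; split=> //; by left|exists x; split=> //; by right].
- by case=> [x [[<-|Hx] <-]]; [left|right; exists x].
Qed.

Definition chi (phi : form tau) (N : nat) : form tau :=
  Exs (iota (vb phi) N) (rel (iota (vb phi) N) phi).

Lemma chi_sentence phi N : sentence phi -> sentence (chi phi N).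
Proof.
move=> Hs x /free_Exs [/free_rel [/Hs //|]] /InE ->; done.
Qed.

Lemma chi_spec A phi N : sentence phi -> 0 < N ->
  (models A (chi phi N) <->
   exists L : seq A, size L = N /\ exists a0 (h0 : List.In a0 L), models (submodel (P := fun a => List.In a L) h0) phi).
Proof.
move=> Hs HN; set M := vb phi; set zs := iota M N.
have Hzs z : List.In z zs -> M <= z by move/InE; rewrite mem_iota => /andP [].
split.
- move=> Hm; have := Hm (fun _ => witness A) => /sat_Exs_elim [t [Ht _]].
  have HM : List.In M zs by apply/InE; rewrite mem_iota leqnn /= -addn1 leq_add2l.
  have h0 : List.In (t M) (map t zs) by apply/In_map; exists M.
  exists (map t zs); split; first by rewrite size_map size_iota.
  exists (t M), h0.
  apply/models_ex => //; exists (fun _ => exist _ (t M) h0).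
  set E := fun n => if n < M then t M else t n.
  have HE : sat E (rel zs phi).
    apply: sat_agree1 Ht => x /free_rel [/Hs //|/Hzs Hx].
    by rewrite /E ltnNge Hx.
  apply/(@rel_sat A (fun a => List.In a (map t zs)) (t M) h0 zs M phi (leqnn _) Hzs E) => //.
  + by move=> n Hn; rewrite /E Hn.
  + move=> a; rewrite In_map; split=> [[z [Hz <-]]|[z [Hz <-]]]; exists z; split => //;
      by rewrite /E ltnNge Hzs.
- move=> [L [HL [a0 [h0 Hm]]]].
  apply/models_ex; first exact: chi_sentence.
  set E := fun n => if n < M then a0 else nth a0 L (n - M).
  exists E; apply: (sat_Exs_intro (t := E)) => //.
  apply: (proj1 (@rel_sat A (fun a => List.In a L) a0 h0 zs M phi (leqnn _) Hzs E (fun _ => exist _ a0 h0) _ _)); last exact: Hm.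
  + by move=> n Hn; rewrite /E Hn.
  + move=> a; rewrite (In_nth a0); split.
    * move=> [k [Hk <-]]; exists (M + k); split.
        by apply/InE; rewrite mem_iota leq_addr ltn_add2l -HL.
      by rewrite /E ltnNge leq_addr /= addKn.
    * move=> [z [/InE Hz <-]]; move: Hz; rewrite mem_iota => /andP [H1 H2].
      exists (z - M); split; first by rewrite HL ltn_subLR.
      by rewrite /E ltnNge H1.
Qed.

Lemma sat_Exs_intro' A xs f (t e : nat -> A) :
  sat t f -> (forall x, free x f -> x \in xs) -> sat e (Exs xs f).
Proof.
move=> Ht Hf; apply: (sat_Exs_intro (t := fun y => if y \in xs then t y else e y)).
  by apply: sat_agree1 Ht => x /Hf ->.
by move=> y /negbTE ->.
Qed.

Lemma sub_ext A (P Q : A -> Prop) a0 (h0 : P a0) b0 (k0 : Q b0) phi :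
  sentence phi -> (forall a, P a -> Q a) -> (forall a, Q a -> P a) ->
  models (submodel h0) phi -> models (submodel k0) phi.
Proof.
move=> Hs PQ QP Hm.
pose h := fun x : submodel h0 => (exist Q (proj1_sig x) (PQ _ (proj2_sig x)) : submodel k0).
apply/models_ex => //; exists (fun n => h (exist _ a0 h0)).
have hi : forall x y, h x = h y -> x = y.
  by move=> x y Hxy; apply: sig_eq; exact: (f_equal (@proj1_sig _ _) Hxy).
have hs : forall c, exists b, h b = c.
  by move=> c; exists (exist _ (proj1_sig c) (QP _ (proj2_sig c))); apply: sig_eq.
have hr : forall r (v : 'I_(arity r) -> submodel h0), interp v <-> interp (fun i => h (v i)) by [].
by apply/(iso_sat hi hr hs phi (fun _ => exist _ a0 h0)).
Qed.

Lemma vartheta_of_chi A phi N : sentence phi -> 0 < N ->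
  models A (chi phi N) -> vartheta_sat A phi.
Proof.
move=> Hs HN /(chi_spec _ Hs HN) [L [_ [a0 [h0 Hm]]]].
by exists (fun a => List.In a L), a0, h0.
Qed.

Lemma ext_up phi : sentence phi ->
  (forall A, vartheta_sat A phi <-> models A phi) ->
  forall B C (h : B -> C), (forall a b, h a = h b -> a = b) ->
  (forall r (v : 'I_(arity r) -> B), interp v <-> interp (fun i => h (v i))) ->
  models B phi -> models C phi.
Proof.
move=> Hs HA B C h hinj hrel HB; apply/HA.
pose P := fun c => exists b, h b = c.
have h0 : P (h (witness B)) by exists (witness B).
exists P, (h (witness B)), h0.
pose k := fun b : B => (exist P (h b) (ex_intro _ b erefl) : submodel h0).
apply/models_ex => //; exists (fun n => k (witness B)).
have hi : forall x y, k x = k y -> x = y.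
  by move=> x y Hxy; apply: hinj; exact: (f_equal (@proj1_sig _ _) Hxy).
have hs : forall c, exists b, k b = c.
  by move=> [c [b Hb]]; exists b; apply: sig_eq.
have hr : forall r (v : 'I_(arity r) -> B), interp v <-> interp (fun i => k (v i)).
  by move=> r v; apply: hrel.
by apply/(iso_sat hi hr hs phi (fun _ => witness B)).
Qed.

Lemma part1 phi : sentence phi -> sigma02 phi ->
  expressible (fun A => vartheta_sat A phi).
Proof.
move=> Hs [_ [xs [ys [psi [Hq Hphi]]]]].
have HN : 0 < (size xs).+1 by [].
exists (chi phi (size xs).+1); split; first exact: chi_sentence.
move=> A; split; last exact: vartheta_of_chi.
move=> [P [a0 [h0 Hm]]].
apply/(chi_spec _ Hs HN).
have := Hm (fun _ => exist _ a0 h0); rewrite Hphi => /sat_Exs_elim [t [Ht _]].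
set L := a0 :: map (fun x => proj1_sig (t x)) xs.
have h0' : List.In a0 L by left.
exists L; split; first by rewrite /= size_map.
exists a0, h0'.
have LP a : List.In a L -> P a.
  case=> [<-//|/In_map [x [_ <-]]]; exact: proj2_sig.
pose h := fun s : submodel (P := fun a => List.In a L) h0' => (exist P (proj1_sig s) (LP _ (proj2_sig s)) : submodel h0).
have hi : forall x y, h x = h y -> x = y.
  by move=> x y Hxy; apply: sig_eq; exact: (f_equal (@proj1_sig _ _) Hxy).
have hr : forall r (v : 'I_(arity r) -> submodel (P := fun a => List.In a L) h0'), interp v <-> interp (fun i => h (v i)) by [].
pose t' := fun x => match excluded_middle_informative (List.In (proj1_sig (t x)) L) with
  | left p => (exist _ (proj1_sig (t x)) p : submodel (P := fun a => List.In a L) h0') | right _ => exist _ a0 h0' end.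
have Hfx x : free x (Alls ys psi) -> x \in xs.
  move=> Hx; case: (boolP (x \in xs)) => // Hn.
  by case: (Hs x); rewrite Hphi; apply/free_Exs.
apply/models_ex; first by rewrite -Hphi. exists (fun _ => exist _ a0 h0').
apply: (sat_Exs_intro' (t := t')) => //.
apply: (Alls_down hi hr) => //.
apply: sat_agree1 Ht => x /Hfx Hx; apply: sig_eq => /=.
rewrite /t'; case: excluded_middle_informative => //= Hn; exfalso; apply: Hn.
by right; apply/In_map; exists x; split => //; apply/InE.
Qed.

Lemma dich (X : Type) (x0 : X) n :
  (exists g : nat -> X, forall i j, i < n -> j < n -> g i = g j -> i = j) \/
  (exists f : nat -> X, forall a, exists i, i < n /\ f i = a).
Proof.
elim: n => [|n [[g Hg]|[f Hf]]].
- by left; exists (fun _ => x0).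
- case: (classic (exists a, forall i, i < n -> g i <> a)) => [[a Ha]|Hn].
  + left; exists (fun i => if i == n then a else g i) => i j Hi Hj.
    rewrite ltnS leq_eqVlt in Hi; rewrite ltnS leq_eqVlt in Hj.
    case: eqP Hi => [-> _|Hin /= Hi]; case: eqP Hj => [-> _|Hjn /= Hj] //.
    * by move=> H; exfalso; apply: (Ha j Hj).
    * by move=> H; exfalso; apply: (Ha i Hi).
    * exact: Hg.
  + right; exists g => a; apply: NNPP => Hna; apply: Hn; exists a => i Hi Hia.
    by apply: Hna; exists i; split => //; apply: (leq_trans Hi).
- by right; exists f => a; case: (Hf a) => i [Hi <-]; exists i; split => //; apply: ltnW.
Qed.

Lemma part2 phi : sentence phi ->
  (exists n : nat, 1 <= n /\
      ~ (exists A : structure tau, has_card A n /\ models A (FNeg phi))) ->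
  expressible (fun A => vartheta_sat A phi).
Proof.
move=> Hs [n [Hn Hnc]].
exists (chi phi n); split; first exact: chi_sentence.
move=> A; split; last exact: vartheta_of_chi.
move=> [P [a0 [h0 Hm]]].
apply/(chi_spec _ Hs Hn).
case: (dich a0 n) => [[g Hg]|[f Hf]].
- set L := map g (iota 0 n).
  have h0' : List.In (g 0) L by apply/In_map; exists 0; split => //; apply/InE; rewrite mem_iota.
  exists L; split; first by rewrite size_map size_iota.
  exists (g 0), h0'.
  have hc : has_card (submodel (P := fun a => List.In a L) h0') n.
    have gin (k : 'I_n) : List.In (g k) L by apply/In_map; exists k; split=> //; apply/InE; rewrite mem_iota /=.
    pose G := fun k : 'I_n => (exist _ (g k) (gin k) : submodel (P := fun a => List.In a L) h0').
    have Hinv (s : submodel (P := fun a => List.In a L) h0') : exists k : 'I_n, G k = s.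
      case: s => a Ha; have := Ha; move=> /In_map [k [/InE Hk Hka]].
      move: Hk; rewrite mem_iota /= => Hk.
      by exists (Ordinal Hk); apply: sig_eq.
    exists G; exists (fun s => proj1_sig (constructive_indefinite_description _ (Hinv s))).
    + move=> k; case: constructive_indefinite_description => k' Hk' /=.
      apply: val_inj; apply: Hg; [exact: ltn_ord|exact: ltn_ord|exact: (f_equal (@proj1_sig _ _) Hk')].
    + by move=> s; case: constructive_indefinite_description.
  apply: NNPP => Hnm; apply: Hnc; exists (submodel (P := fun a => List.In a L) h0'); split => //.
  move=> e /= He; apply: Hnm; apply/models_ex => //; by exists e.
- pose c := fun i => match excluded_middle_informative (P (f i)) with
    | left _ => f i | right _ => a0 end.
  set L := map c (iota 0 n).
  have LP a : List.In a L <-> P a.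
    rewrite In_map; split.
      by move=> [i [_ <-]]; rewrite /c; case: excluded_middle_informative.
    move=> Pa; case: (Hf a) => i [Hi Hfi]; exists i; split; first by apply/InE; rewrite mem_iota.
    by rewrite /c; case: excluded_middle_informative => //; rewrite Hfi.
  have h0' : List.In a0 L by apply/LP.
  exists L; split; first by rewrite size_map size_iota.
  exists a0, h0'.
  by apply: (sub_ext (h0 := h0)) => // a /LP.
Qed.

Lemma part3b phi : sentence phi ->
  (exists psi : form tau, sigma01 psi /\ log_equiv phi psi) ->
  expressed_by (fun A => vartheta_sat A phi) phi.
Proof.
move=> Hs [psi [[Hps [xs [p0 [Hq Hpsi]]]] Heq]].
split => // A; split.
- move=> [P [a0 [h0 Hm]]]; apply/Heq; move: Hm => /Heq Hm.
  have := Hm (fun _ => exist _ a0 h0); rewrite Hpsi => /sat_Exs_elim [t [Ht _]].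
  have hi : forall x y : submodel h0, proj1_sig x = proj1_sig y -> x = y by move=> x y /sig_eq.
  have hr : forall r (v : 'I_(arity r) -> submodel h0), interp v <-> interp (fun i => proj1_sig (v i)) by [].
  move: Ht; rewrite (emb_qf hi hr) // => Ht.
  move=> e; apply: (sat_Exs_intro' (t := fun n => proj1_sig (t n))) => [|x Hx]; first exact: Ht.
  case: (boolP (x \in xs)) => // Hn; case: (Hps x); rewrite Hpsi; apply/free_Exs; by split.
- move=> Hm.
  exists (fun _ => True), (witness A), I.
  pose h := fun a : A => (exist (fun _ : A => True) a I : submodel (P := fun _ : A => True) (a0 := witness A) I).
  have hi : forall x y, h x = h y -> x = y.
    by move=> x y Hxy; case: Hxy.
  have hs : forall c, exists b, h b = c by move=> [c []]; exists c.
  have hr : forall r (v : 'I_(arity r) -> A), interp v <-> interp (fun i => h (v i)) by [].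
  apply/models_ex => //; exists (fun n => h (witness A)).
  by apply/(iso_sat hi hr hs phi (fun _ => witness A)).
Qed.
End Basic.


Section UL.
Variables (I : Type) (U : ultra I).

Lemma uex S : U S -> exists i, S i.
Proof. move=> H; apply: NNPP => Hn; apply: (@u0 _ U); apply: uS H => i Si; apply: Hn; by exists i. Qed.

Lemma uN S : U (fun i => ~ S i) <-> ~ U S.
Proof.
split.
- move=> H1 H2; have [i []] := uex (uI H1 H2); done.
- by case: (@uC _ U S).
Qed.

Lemma uOr S T : U (fun i => S i \/ T i) <-> U S \/ U T.
Proof.
split.
- move=> H; case: (@uC _ U S) => [|HS]; first by left.
  right; apply: uS (uI H HS) => i [[]]; done.
- by case=> H; apply: uS H => i; [left|right].
Qed.

Lemma uImp S T : U (fun i => S i -> T i) <-> (U S -> U T).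
Proof.
split.
- by move=> H HS; apply: uS (uI H HS) => i [H1 H2]; apply: H1.
- move=> H; case: (@uC _ U S) => HS.
    by apply: uS (H HS) => i.
  by apply: uS HS => i HS HSi.
Qed.

Lemma uAnd S T : U (fun i => S i /\ T i) <-> U S /\ U T.
Proof.
split; last by case=> H1 H2; apply: uI.
by move=> H; split; apply: uS H => i [].
Qed.

Lemma uBig n (S : 'I_n -> I -> Prop) :
  (forall k, U (S k)) -> U (fun i => forall k, S k i).
Proof.
elim: n S => [|n IH] S H.
  by apply: uS (@uT _ U) => i _ [].
have H1 := IH (fun k => S (lift ord0 k)) (fun k => H _).
apply: uS (uI (H ord0) H1) => i [H0 Hl] k.
case: (unliftP ord0 k) => [j ->|->] //.
Qed.
End UL.

Lemma dchoice (I : Type) (M : I -> Type) (w : forall i, M i) (P : forall i, M i -> Prop) :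
  {f : forall i, M i | forall i, (exists a, P i a) -> P i (f i)}.
Proof.
exists (fun i => match excluded_middle_informative (exists a, P i a) with
  | left h => proj1_sig (constructive_indefinite_description _ h)
  | right _ => w i end).
move=> i H; case: excluded_middle_informative => // h.
exact: (proj2_sig (constructive_indefinite_description _ h)).
Qed.

Section Ultraproduct.
Variables (tau : signature) (I : Type) (U : ultra I) (M : I -> structure tau).

Definition prodT := forall i, M i.
Definition eqU (x y : prodT) : Prop := U (fun i => x i = y i).
Definition UPc := {c : prodT -> Prop | exists x, c = eqU x}.
Definition cls (x : prodT) : UPc := exist _ (eqU x) (ex_intro _ x erefl).
Definition rep (c : UPc) : prodT :=
  proj1_sig (constructive_indefinite_description _ (proj2_sig c)).

Lemma cls_rep c : cls (rep c) = c.
Proof.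
apply: sig_eq; rewrite /rep /=; case: constructive_indefinite_description => x /= ->; done.
Qed.

Lemma eqU_refl x : eqU x x.
Proof. by apply: uS (@uT _ U) => i. Qed.
Lemma eqU_sym x y : eqU x y -> eqU y x.
Proof. by apply: uS => i. Qed.
Lemma eqU_trans x y z : eqU x y -> eqU y z -> eqU x z.
Proof. by move=> H1 H2; apply: uS (uI H1 H2) => i [-> ->]. Qed.

Lemma cls_eq x y : cls x = cls y <-> eqU x y.
Proof.
split.
- move=> H; have := f_equal (@proj1_sig _ _) H => /= Hxy.
  by apply: eqU_sym; rewrite -Hxy; apply: eqU_refl.
- move=> H; apply: sig_eq => /=; apply: functional_extensionality => z.
  apply: propositional_extensionality; split => Hz.
    exact: eqU_trans (eqU_sym H) Hz.
  exact: eqU_trans H Hz.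
Qed.

Lemma rep_cls x : eqU (rep (cls x)) x.
Proof. by apply/cls_eq; rewrite cls_rep. Qed.

Definition UP : structure tau :=
  @Structure tau UPc (cls (fun i => witness (M i)))
    (fun r v => U (fun i => @interp tau (M i) r (fun k => rep (v k) i))).

Definition proj (e : nat -> UP) (i : I) : nat -> M i := fun n => rep (e n) i.

Lemma los f : forall (e : nat -> UP), sat e f <-> U (fun i => sat (proj e i) f).
Proof.
elim: f => [|x y|r v|g IH|g IH h IH'|g IH h IH'|g IH h IH'|y g IH|y g IH] e /=.
- by split => // /(@u0 _ U).
- by have := cls_eq (rep (e x)) (rep (e y)); rewrite !cls_rep.
- done.
- by rewrite IH uN.
- by rewrite IH IH' uAnd.
- by rewrite IH IH' uOr.
- by rewrite IH IH' uImp.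
- have Hp c i : proj (upd e y c) i = upd (proj e i) y (rep c i).
    by apply: functional_extensionality => n; rewrite /proj /upd; case: eqP.
  split.
  + move=> [c /IH Hc]; apply: uS Hc => i; rewrite Hp => H; by exists (rep c i).
  + move=> H.
    have [a Ha] := dchoice (fun i => witness (M i)) (fun i a => sat (upd (proj e i) y a) g).
    exists (cls a); apply/IH.
    apply: uS (uI H (eqU_sym (rep_cls a))) => i [/Ha Hi Hri]; rewrite Hp -Hri //.
- have Hp c i : proj (upd e y c) i = upd (proj e i) y (rep c i).
    by apply: functional_extensionality => n; rewrite /proj /upd; case: eqP.
  split.
  + move=> H; apply: NNPP => Hn; move/uN: Hn => Hn.
    have Hn' : U (fun i => exists a, ~ sat (upd (proj e i) y a) g).
      by apply: uS Hn => i /not_all_ex_not.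
    have [a Ha] := dchoice (fun i => witness (M i)) (fun i a => ~ sat (upd (proj e i) y a) g).
    have := H (cls a); move/IH => Hc.
    have [i [[/Ha Hi Hri] Hs]] := uex (uI (uI Hn' (eqU_sym (rep_cls a))) Hc).
    by apply: Hi; rewrite Hri -Hp.
  + move=> H c; apply/IH; apply: uS H => i Hi; rewrite Hp; exact: Hi.
Qed.
End Ultraproduct.


Section Conj.
Variable tau : signature.

Definition bigconj (X : Type) (l : seq X) (g : X -> form tau) : form tau :=
  foldr (fun x acc => FAnd (g x) acc) (FNeg (FBot tau)) l.

Lemma sat_bigconj (A : structure tau) (t : nat -> A) X (l : seq X) g :
  sat t (bigconj l g) <-> forall x, List.In x l -> sat t (g x).
Proof.
elim: l => [|x l IH] /=; first by split=> [_ y []|_ []].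
rewrite IH; split.
- by move=> [H1 H2] y [<-|Hy]; [|apply: H2].
- by move=> H; split; [apply: H; left|move=> y Hy; apply: H; right].
Qed.

Lemma qfree_bigconj X (l : seq X) g : (forall x, qfree (g x)) -> qfree (bigconj l g).
Proof. by move=> H; elim: l => [|x l IH] //=. Qed.

Lemma free_bigconj X (l : seq X) g y :
  free y (bigconj l g) -> exists x, List.In x l /\ free y (g x).
Proof.
elim: l => [|x l IH] //=.
case=> [H|/IH [z [Hz H]]]; [exists x; split; [left|]|exists z; split; [right|]] => //.
Qed.

Lemma In_cat (X : Type) (x : X) s1 s2 : List.In x (s1 ++ s2) <-> List.In x s1 \/ List.In x s2.
Proof.
elim: s1 => [|y s1 IH] /=; first by split; [right|case].
rewrite IH; split; by [case=> [|[]]; auto|case=> [[]|]; auto].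
Qed.
End Conj.

Section Diag.
Variables (tau : signature) (A : structure tau).
Let a0 := witness A.

Definition lit (s : seq A) (r : rsym tau) (f : {ffun 'I_(arity r) -> 'I_(size s)}) : form tau :=
  if excluded_middle_informative (interp (fun k => nth a0 s (f k)))
  then FRel (fun k => nat_of_ord (f k)) else FNeg (FRel (fun k => nat_of_ord (f k))).

Definition eqlit (s : seq A) (p q : nat) : form tau :=
  if excluded_middle_informative (nth a0 s p = nth a0 s q)
  then FEq tau p q else FNeg (FEq tau p q).

Definition diag (s : seq A) (rs : seq (rsym tau)) : form tau :=
  FAnd (bigconj (iota 0 (size s)) (fun p => bigconj (iota 0 (size s)) (fun q => eqlit s p q)))
       (bigconj rs (fun r => bigconj (enum {ffun 'I_(arity r) -> 'I_(size s)}) (fun f => lit f))).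

Lemma In_iota p n : List.In p (iota 0 n) <-> p < n.
Proof. by rewrite InE mem_iota. Qed.

Lemma In_enum (T : finType) (x : T) : List.In x (enum T).
Proof. by apply/InE; rewrite mem_enum. Qed.

Lemma diag_qfree s rs : qfree (diag s rs).
Proof.
split; apply: qfree_bigconj => x; apply: qfree_bigconj => y;
  by [rewrite /eqlit; case: excluded_middle_informative|rewrite /lit; case: excluded_middle_informative].
Qed.

Lemma diag_free s rs x : free x (diag s rs) -> x < size s.
Proof.
case=> /free_bigconj [p [Hp /free_bigconj [q [Hq]]]].
- by rewrite /eqlit; case: excluded_middle_informative => _ /= [->|->]; apply/In_iota.
- by rewrite /lit; case: excluded_middle_informative => _ /= [k <-].
Qed.

Lemma diag_A s rs : sat (fun n => nth a0 s n) (diag s rs).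
Proof.
split; apply/sat_bigconj => x Hx; apply/sat_bigconj => y Hy.
- by rewrite /eqlit; case: excluded_middle_informative.
- by rewrite /lit; case: excluded_middle_informative.
Qed.

Lemma diag_eq (B : structure tau) (t : nat -> B) s rs : sat t (diag s rs) ->
  forall p q, p < size s -> q < size s -> (nth a0 s p = nth a0 s q <-> t p = t q).
Proof.
move=> [H _] p q Hp Hq.
move/sat_bigconj: H => /(_ p (proj2 (In_iota _ _) Hp)) /sat_bigconj /(_ q (proj2 (In_iota _ _) Hq)).
rewrite /eqlit; case: excluded_middle_informative => //= H1 H2; tauto.
Qed.

Lemma diag_rel (B : structure tau) (t : nat -> B) s rs : sat t (diag s rs) ->
  forall r, List.In r rs -> forall f : {ffun 'I_(arity r) -> 'I_(size s)},
  (interp (fun k => nth a0 s (f k)) <-> interp (fun k => t (f k))).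
Proof.
move=> [_ H] r Hr f.
move/sat_bigconj: H => /(_ r Hr) /sat_bigconj /(_ f (In_enum f)).
rewrite /lit; case: excluded_middle_informative => //= H1 H2; tauto.
Qed.
End Diag.

Section LT.
Variables (tau : signature) (phi : form tau).
Hypothesis Hs : sentence phi.
Hypothesis HA : forall A : structure tau, vartheta_sat A phi <-> models A phi.

Definition Dset (d : form tau) : Prop :=
  qfree d /\ (exists k, forall x, free x d -> x < k) /\
  forall B : structure tau, (exists t : nat -> B, sat t d) -> models B phi.

Lemma Dset_bot : Dset (FBot tau).
Proof. by split => //; split; [exists 0|move=> B [t []]]. Qed.

Lemma Dset_or d1 d2 : Dset d1 -> Dset d2 -> Dset (FOr d1 d2).
Proof.
move=> [q1 [[k1 K1] S1]] [q2 [[k2 K2] S2]]; split => //; split.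
- exists (maxn k1 k2) => x [/K1 H|/K2 H]; apply: (leq_trans H); by rewrite ?leq_maxl ?leq_maxr.
- move=> B [t [H|H]]; [apply: S1|apply: S2]; by exists t.
Qed.

Lemma step2 (A : structure tau) : models A phi ->
  (forall d, Dset d -> ~ exists t : nat -> A, sat t d) -> False.
Proof.
move=> HAm HD.
set a0 := witness A.
pose J := (seq A * seq (rsym tau))%type.
have Hj (j : J) : exists p : {B : structure tau & nat -> B},
    sat (projT2 p) (diag j.1 j.2) /\ ~ models (projT1 p) phi.
  apply: NNPP => Hn; apply: (HD (diag j.1 j.2)).
  - split; first exact: diag_qfree.
    split; first by exists (size j.1) => x /diag_free.
    move=> B [t Ht]; apply: NNPP => HB; apply: Hn; by exists (existT _ B t).
  - by exists (fun n => nth a0 j.1 n); apply: diag_A.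
pose Bj := fun j => projT1 (proj1_sig (constructive_indefinite_description _ (Hj j))).
pose tj := fun j => projT2 (proj1_sig (constructive_indefinite_description _ (Hj j))) : nat -> Bj j.
have Htj j : sat (tj j) (diag j.1 j.2) /\ ~ models (Bj j) phi.
  exact: (proj2_sig (constructive_indefinite_description _ (Hj j))).
pose Sets := fun (q j : J) => (forall a, List.In a q.1 -> List.In a j.1) /\
                              (forall r, List.In r q.2 -> List.In r j.2).
have [V HV] : exists V : ultra J, forall q, V (Sets q).
  apply: (@UF.directed_ultra J J Sets ([::], [::]) (fun a b => (a.1 ++ b.1, a.2 ++ b.2))).
  - move=> a b i [H1 H2]; split; split => y Hy;
      [apply: H1|apply: H2|apply: H1|apply: H2]; apply/In_cat; by [left|right].
  - by move=> q; exists q.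
pose x := fun (a : A) (j : J) =>
  match excluded_middle_informative (exists p, p < size j.1 /\ nth a0 j.1 p = a) with
  | left h => tj j (proj1_sig (constructive_indefinite_description _ h))
  | right _ => witness (Bj j) end.
have Hx a j : List.In a j.1 -> exists p, p < size j.1 /\ nth a0 j.1 p = a /\ x a j = tj j p.
  move=> Ha; rewrite /x; case: excluded_middle_informative => [h|hn].
  - case: constructive_indefinite_description => p [H1 H2] /=; by exists p.
  - by exfalso; apply: hn; apply/(In_nth a0).
pose w := fun a : A => (cls (M := Bj) V (x a) : UP V Bj).
have winj : forall a b, w a = w b -> a = b.
  move=> a b /cls_eq Hab.
  have [j [Hj1 Hj2]] := uex (uI (HV ([:: a; b], [::])) Hab).
  have [p [Hp [Hpa Hxp]]] := Hx a j (proj1 Hj1 a (or_introl erefl)).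
  have [q [Hq [Hqb Hxq]]] := Hx b j (proj1 Hj1 b (or_intror (or_introl erefl))).
  rewrite -Hpa -Hqb; apply/(diag_eq (proj1 (Htj j)) Hp Hq).
  by rewrite -Hxp -Hxq.
have wrel : forall r (v : 'I_(arity r) -> A), interp v <-> interp (fun i => w (v i)).
  move=> r v.
  set G := Sets (map v (enum 'I_(arity r)), [:: r]).
  have HR : V (fun j => forall k, rep (w (v k)) j = x (v k) j).
    apply: uBig => k; exact: rep_cls.
  have key j : G j -> (forall k, rep (w (v k)) j = x (v k) j) ->
      (@interp _ (Bj j) r (fun k => rep (w (v k)) j) <-> interp v).
    move=> [G1 G2] HRj.
    have Hk (k : 'I_(arity r)) : exists p : 'I_(size j.1), nth a0 j.1 p = v k /\ x (v k) j = tj j p.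
      have := G1 (v k); rewrite In_map => /(_ (ex_intro _ k (conj (In_enum k) erefl))) /Hx.
      move=> [p [Hp [H1 H2]]]; by exists (Ordinal Hp).
    pose F := [ffun k => proj1_sig (constructive_indefinite_description _ (Hk k))].
    have HF k : nth a0 j.1 (F k) = v k /\ x (v k) j = tj j (F k).
      by rewrite ffunE; exact: (proj2_sig (constructive_indefinite_description _ (Hk k))).
    have := diag_rel (proj1 (Htj j)) (G2 r (or_introl erefl)) F.
    have -> : (fun k => nth a0 j.1 (F k)) = v.
      by apply: functional_extensionality => k; case: (HF k).
    have -> : (fun k => tj j (F k)) = (fun k => rep (w (v k)) j).
      by apply: functional_extensionality => k; rewrite HRj; case: (HF k).
    by move=> ->.
  split.
  - move=> Hv; apply: uS (uI (HV (map v (enum 'I_(arity r)), [:: r])) HR) => j [Gj Rj]; exact/(key j Gj Rj).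
  - move=> Hw; have [j [[Gj Rj] Hwj]] := uex (uI (uI (HV (map v (enum 'I_(arity r)), [:: r])) HR) Hw).
    exact/(key j Gj Rj).
have HB := ext_up Hs HA winj wrel HAm.
have := HB (fun _ => witness (UP V Bj)); move/los => /uex [j Hj'].
apply: (proj2 (Htj j)); apply/models_ex => //; by eexists; exact: Hj'.
Qed.

Lemma part3a : exists psi : form tau, sigma01 psi /\ log_equiv phi psi.
Proof.
case: (classic (exists d, Dset d /\ forall A : structure tau, models A phi -> exists t : nat -> A, sat t d)).
- move=> [d [[Hq [[k Hk] HS]] Hd]].
  have Hfk x : free x d -> x \in iota 0 k by move/Hk; rewrite mem_iota.
  exists (Exs (iota 0 k) d); split.
  + split; last by exists (iota 0 k), d.
    by move=> x /free_Exs [/Hfk -> ].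
  + move=> A; split.
    * move/Hd => [t Ht] e; apply: (sat_Exs_intro' (t := t)) => //.
    * move=> Hm; apply: HS; have := Hm (fun _ => witness A) => /sat_Exs_elim [t [Ht _]].
      by exists t.
- move=> Hn; exfalso.
  have H d : Dset d -> exists A : structure tau, models A phi /\ ~ exists t : nat -> A, sat t d.
    move=> Hd; apply: NNPP => H1; apply: Hn; exists d; split => // A HAm.
    apply: NNPP => H2; apply: H1; by exists A.
  pose I := {d | Dset d}.
  pose M := fun i : I => proj1_sig (constructive_indefinite_description _ (H _ (proj2_sig i))).
  have HM i : models (M i) phi /\ ~ exists t : nat -> M i, sat t (proj1_sig i).
    exact: (proj2_sig (constructive_indefinite_description _ (H _ (proj2_sig i)))).
  pose Sets := fun (q i : I) => forall B : structure tau,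
    (exists t : nat -> B, sat t (proj1_sig q)) -> exists t : nat -> B, sat t (proj1_sig i).
  have [U HU] : exists U : ultra I, forall q, U (Sets q).
    apply: (@UF.directed_ultra I I Sets (exist _ _ Dset_bot)
      (fun a b => exist _ (FOr (proj1_sig a) (proj1_sig b)) (Dset_or (proj2_sig a) (proj2_sig b)))).
    + move=> a b i Hab; split=> B [t Ht]; apply: Hab; exists t; by [left|right].
    + by move=> q; exists q.
  apply: (@step2 (UP U M)).
  + apply/models_ex => //; exists (fun _ => witness (UP U M)); apply/los.
    by apply: uS (@uT _ U) => i _; apply: (proj1 (HM i)).
  + move=> d Hd [t /los Ht].
    have [i [Hi1 Hi2]] := uex (uI (HU (exist _ d Hd)) Ht).
    apply: (proj2 (HM i)); apply: Hi1; by eexists; exact: Hi2.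
Qed.
End LT.


Theorem corollary1 (tau : signature) (phi : form tau) :
  sentence phi ->
  (sigma02 phi -> expressible (fun A => vartheta_sat A phi)) /\
  ((exists n : nat, 1 <= n /\
      ~ (exists A : structure tau, has_card A n /\ models A (FNeg phi))) ->
     expressible (fun A => vartheta_sat A phi)) /\
  (expressed_by (fun A => vartheta_sat A phi) phi <->
     exists psi : form tau, sigma01 psi /\ log_equiv phi psi).
Proof.
move=> Hs; split; first exact: part1.
split; first exact: part2.
split.
- by move=> [_ HA]; exact: (part3a Hs HA).
- exact: part3b.
Qed.
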